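(* Let $u_0,\dots,u_{n-2}$ be unitaries on $(\mathbb{C}^2)^{\otimes n}$ with $u_t$ acting on qubits $t,t+1$. Define propagators $U_{t_2:t_1}=u_{t_2-1}\cdots u_{t_1}$ if $t_2>t_1$, $U_{t:t}=\mathbb{1}$, and $U_{t_2:t_1}=u_{t_2}^\dagger\cdots u_{t_1-1}^\dagger$ if $t_2<t_1$. For a strictly increasing tuple $\mathbf t=(t_1<\dots<t_M)$ in $\{0,\dots,n-1\}$ let $U_{\mathbf t:0}=U_{t_1:0}U_{t_2:0}\cdots U_{t_M:0}$. Then for any two such tuples $\mathbf t,\mathbf t'$ of the same length $M$, $$U_{\mathbf t:0}=V\,U_{\mathbf s:0},\qquad U_{\mathbf t':0}=W\,U_{\mathbf s:0},$$ where $\mathbf s=(\max(t_1,t'_1),\dots,\max(t_M,t'_M))$ and $$V=\prod_{j:\,t_j<t'_j}U_{t_j:t'_j},\qquad W=\prod_{j:\,t_j>t'_j}U_{t'_j:t_j},$$ with the products ordered from small $j$ on the right to large $j$ on the left. *)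

(* Defs.v *)
From mathcomp Require Import all_boot all_order all_algebra.
Set Implicit Arguments. Unset Strict Implicit. Unset Printing Implicit Defensive.
Import Order.TTheory GRing.Theory Num.Theory.
Local Open Scope ring_scope.

(* Operators on (C^2)^{\otimes n} are 2^n x 2^n matrices over a numeric closed
   field C (e.g. the complex numbers).  A basis index i : 'I_(2^n) encodes the
   bit string whose k-th bit (qubit k) is [qbit i k]. *)
Definition qbit (i : nat) (k : nat) : bool := odd (i %/ 2 ^ k).

Definition adj {C : numClosedFieldType} {m} (A : 'M[C]_m) : 'M[C]_m :=
  (map_mx Num.conj A)^T.

Definition unitary {C : numClosedFieldType} {m} (A : 'M[C]_m) : Prop :=
  A *m adj A = 1%:M /\ adj A *m A = 1%:M.

Definition pair_idx (i t : nat) : 'I_4 := inord (qbit i t + 2 * qbit i t.+1)%N.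

(* A acts on qubits t, t+1 only: A = g (on qubits t,t+1) tensor identity on
   the remaining qubits. *)
Definition acts_on_pair {C : numClosedFieldType} (n t : nat)
    (A : 'M[C]_(2 ^ n)) : Prop :=
  exists g : 'M[C]_4, forall i j : 'I_(2 ^ n),
    A i j = if [forall k : 'I_n, ((k != t :> nat) && (k != t.+1 :> nat))
                                   ==> (qbit i k == qbit j k)]
            then g (pair_idx i t) (pair_idx j t) else 0.

Definition mprod {C : numClosedFieldType} {m} (s : seq 'M[C]_m) : 'M[C]_m :=
  foldr (fun A B => A *m B) 1%:M s.

Definition prop {C : numClosedFieldType} {m} (u : nat -> 'M[C]_m)
    (t2 t1 : nat) : 'M[C]_m :=
  if (t1 <= t2)%N then
    mprod [seq u k | k <- rev (iota t1 (t2 - t1))]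
  else
    mprod [seq adj (u k) | k <- iota t2 (t1 - t2)].

Definition prop_tuple {C : numClosedFieldType} {m} (u : nat -> 'M[C]_m)
    (M : nat) (t : nat -> nat) : 'M[C]_m :=
  mprod [seq prop u (t j) 0 | j <- iota 0 M].

(* Main.v *)
Require Import Defs.
From mathcomp Require Import all_boot all_order all_algebra.
From mathcomp Require Import zify.
Import Order.TTheory GRing.Theory Num.Theory.
Local Open Scope ring_scope.

Lemma qbit0 i : qbit i 0 = odd i.
Proof. by rewrite /qbit expn0 divn1. Qed.

Lemma qbitS i m : qbit i m.+1 = qbit i./2 m.
Proof. by rewrite /qbit expnS divnMA divn2. Qed.

Lemma qbit_inj n i j : (i < 2 ^ n)%N -> (j < 2 ^ n)%N ->
  (forall m, (m < n)%N -> qbit i m = qbit j m) -> i = j.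
Proof.
elim: n i j => [|n IH] i j.
  by rewrite expn0; case: i => //; case: j.
move=> Hi Hj H.
have h2 : i./2 = j./2.
  apply: IH; first by rewrite -divn2; rewrite expnS in Hi; lia.
    by rewrite -divn2; rewrite expnS in Hj; lia.
  by move=> m Hm; rewrite -!qbitS; apply: H.
have h1 : odd i = odd j by rewrite -!qbit0; apply: H.
by rewrite -(odd_double_half i) -(odd_double_half j) h1 h2.
Qed.

Lemma qbit_ex n (f : nat -> bool) : exists k, (k < 2 ^ n)%N /\
  forall m, (m < n)%N -> qbit k m = f m.
Proof.
elim: n f => [|n IH] f; first by exists 0%N.
have [k' [Hk' Hb]] := IH (fun m => f m.+1).
exists (f 0%N + 2 * k')%N; split.
  rewrite expnS; case: (f 0%N) => /=; lia.
case=> [|m] Hm.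
  by rewrite qbit0 oddD oddM /= addbF oddb.
rewrite qbitS -divn2.
have -> : ((f 0%N + 2 * k') %/ 2 = k')%N by case: (f 0%N) => /=; lia.
by apply: Hb.
Qed.

Definition out4 (a b k : nat) : bool :=
  [&& k != a, k != a.+1, k != b & k != b.+1]%N.

Lemma out4C a b k : out4 a b k = out4 b a k.
Proof. by rewrite /out4; do !case: eqP => //=. Qed.

Lemma pair_idx_eq i j t : qbit i t = qbit j t -> qbit i t.+1 = qbit j t.+1 ->
  pair_idx i t = pair_idx j t.
Proof. by rewrite /pair_idx => -> ->. Qed.

Lemma mulpairq (C : numClosedFieldType) n a b (A B : 'M[C]_(2 ^ n)) g h :
  (a != b)%N -> (a.+1 != b)%N -> (a != b.+1)%N -> (a.+1 < n)%N -> (b.+1 < n)%N ->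
  (forall i j : 'I_(2 ^ n), A i j = if [forall k : 'I_n, ((k != a :> nat) && (k != a.+1 :> nat))
                                   ==> (qbit i k == qbit j k)]
            then g (pair_idx i a) (pair_idx j a) else 0) ->
  (forall i j : 'I_(2 ^ n), B i j = if [forall k : 'I_n, ((k != b :> nat) && (k != b.+1 :> nat))
                                   ==> (qbit i k == qbit j k)]
            then h (pair_idx i b) (pair_idx j b) else 0) ->
  forall i j : 'I_(2 ^ n), (A *m B) i j =
    if [forall k : 'I_n, out4 a b k ==> (qbit i k == qbit j k)]
    then g (pair_idx i a) (pair_idx j a) * h (pair_idx i b) (pair_idx j b) else 0.
Proof.
move=> ab a1b ab1 an bn HA HB i j.
rewrite !mxE; case: ifP => Q.
  have [k0 [Hk0 Hb]] := qbit_ex n (fun m => if (m == a) || (m == a.+1) then qbit j m else qbit i m).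
  have Q' : forall m, (m < n)%N -> out4 a b m -> qbit i m = qbit j m.
    by move=> m Hm Ho; move/forallP: Q => /(_ (Ordinal Hm)) /implyP /(_ Ho) /eqP.
  rewrite (bigD1 (Ordinal Hk0)) //= big1 ?addr0.
    rewrite HA HB.
    have -> : [forall k : 'I_n, ((k != a :> nat) && (k != a.+1 :> nat)) ==> (qbit i k == qbit (Ordinal Hk0) k)].
      apply/forallP => k; apply/implyP => /andP [/negbTE k1 /negbTE k2].
      by rewrite /= Hb // k1 k2.
    have -> : [forall k : 'I_n, ((k != b :> nat) && (k != b.+1 :> nat)) ==> (qbit (Ordinal Hk0) k == qbit j k)].
      apply/forallP => k; apply/implyP => /andP [/negbTE k1 /negbTE k2].
      rewrite /= Hb //; case: ifP => // /norP [k3 k4].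
      by rewrite Q' // /out4 k3 k4 k1 k2.
    congr (g _ _ * h _ _); apply: pair_idx_eq; rewrite /= Hb //; try lia.
    - by rewrite eqxx.
    - by rewrite eqxx orbT.
    - by rewrite ifF //; apply/norP; split; apply/eqP; move/eqP: ab; move/eqP: a1b; lia.
    - by rewrite ifF //; apply/norP; split; apply/eqP; move/eqP: ab; move/eqP: ab1; lia.
  all: try lia.
  move=> k Hk; rewrite HA HB.
  case: ifP => PA; last by rewrite mul0r.
  case: ifP => PB; last by rewrite mulr0.
  exfalso; move/negP: Hk; apply; apply/eqP/val_inj => /=.
  apply: (@qbit_inj n) => // m Hm; rewrite Hb //.
  move/forallP: PA => /(_ (Ordinal Hm)) /implyP /= PA.
  move/forallP: PB => /(_ (Ordinal Hm)) /implyP /= PB.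
  case: ifP => [/orP H|/norP [H1 H2]].
    by apply/eqP; apply: PB; case: H => /eqP ->; apply/andP; split; apply/eqP; move/eqP: ab; move/eqP: a1b; move/eqP: ab1; lia.
  by apply/esym/eqP; apply: PA; rewrite H1 H2.
apply: big1 => k _; rewrite HA HB.
case: ifP => PA; last by rewrite mul0r.
case: ifP => PB; last by rewrite mulr0.
move/negbT: Q => /negP []; apply/forallP => m; apply/implyP => /and4P [m1 m2 m3 m4].
move/forallP: PA => /(_ m) /implyP; rewrite m1 m2 => /(_ isT) /eqP ->.
by move/forallP: PB => /(_ m) /implyP; rewrite m3 m4 => /(_ isT).
Qed.

Lemma pair_comm (C : numClosedFieldType) n p q (A B : 'M[C]_(2 ^ n)) :
  (p.+1 < q)%N -> (q.+1 < n)%N -> acts_on_pair p A -> acts_on_pair q B ->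
  A *m B = B *m A.
Proof.
move=> pq qn [g HA] [h HB]; apply/matrixP => i j.
rewrite (@mulpairq C n p q A B g h _ _ _ _ _ HA HB) ?(@mulpairq C n q p B A h g _ _ _ _ _ HB HA);
  try (apply/eqP; lia); try lia.
rewrite mulrC; congr (if _ then _ else _).
by apply: eq_forallb => k; rewrite out4C.
Qed.

Definition commute_mx {C : numClosedFieldType} {m} (A B : 'M[C]_m) := A *m B = B *m A.

Lemma mprod_cat (C : numClosedFieldType) m (s1 s2 : seq 'M[C]_m) :
  mprod (s1 ++ s2) = mprod s1 *m mprod s2.
Proof. by elim: s1 => [|x s IH] /=; rewrite ?mul1mx // IH mulmxA. Qed.

Lemma comm_mprod (C : numClosedFieldType) m (x : 'M[C]_m) s :
  (forall y, y \in s -> x *m y = y *m x) -> x *m mprod s = mprod s *m x.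
Proof.
elim: s => [|y s IH] H /=; first by rewrite mulmx1 mul1mx.
rewrite mulmxA H ?mem_head // -!mulmxA IH // => z Hz.
by apply: H; rewrite in_cons Hz orbT.
Qed.

Lemma comm_mprod2 (C : numClosedFieldType) m (s1 s2 : seq 'M[C]_m) :
  (forall x y, x \in s1 -> y \in s2 -> x *m y = y *m x) ->
  mprod s1 *m mprod s2 = mprod s2 *m mprod s1.
Proof.
move=> H; apply/esym/comm_mprod => y Hy.
by apply/esym/comm_mprod => x Hx; apply: H.
Qed.

Lemma adj_comm (C : numClosedFieldType) m (A B : 'M[C]_m) :
  unitary B -> A *m B = B *m A -> adj B *m A = A *m adj B.
Proof.
move=> [H1 H2] H.
rewrite -[adj B *m A]mulmx1 -H1 !mulmxA -(mulmxA _ A) H mulmxA H2 mul1mx //.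
Qed.

Lemma rev_iotaS M : rev (iota 0 M.+1) = M :: rev (iota 0 M).
Proof. by rewrite -addn1 iotaD rev_cat add0n. Qed.

Section Props.
Variables (C : numClosedFieldType) (n : nat) (u : nat -> 'M[C]_(2 ^ n)).
Hypothesis hu : forall k : nat, (k.+1 < n)%N -> unitary (u k) /\ acts_on_pair k (u k).

Lemma cancel_prop t d : (t + d < n)%N ->
  mprod [seq adj (u k) | k <- iota t d] *m mprod [seq u k | k <- rev (iota 0 (t + d))]
  = mprod [seq u k | k <- rev (iota 0 t)].
Proof.
elim: d => [|d IH] H; first by rewrite addn0 /= mul1mx.
rewrite -(addn1 d) iotaD map_cat mprod_cat addnA addn1 rev_iotaS /= mulmx1.
rewrite -mulmxA (mulmxA (adj _)).
have [_ ->] := (@hu (t + d) ltac:(lia)).1.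
by rewrite mul1mx IH //; lia.
Qed.

Lemma propL t t' : (t < t')%N -> (t' < n)%N -> prop u t t' *m prop u t' 0 = prop u t 0.
Proof.
move=> h1 h2; rewrite /prop leqNgt h1 /= !subn0.
have -> : t' = (t + (t' - t))%N by lia.
by rewrite addKn cancel_prop //; lia.
Qed.

Lemma comm_prop c a b : (c < a)%N -> (a < b)%N -> (b < n)%N ->
  prop u a b *m prop u c 0 = prop u c 0 *m prop u a b.
Proof.
move=> ca ab bn; rewrite /prop leqNgt ab /= !subn0.
apply: comm_mprod2 => x y /mapP [k Hk ->] /mapP [m Hm ->].
move: Hk Hm; rewrite mem_rev !mem_iota => Hk Hm.
apply: adj_comm; first by case: (@hu k ltac:(lia)).
apply: (@pair_comm C n m k); try lia.
  by case: (@hu m ltac:(lia)).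
by case: (@hu k ltac:(lia)).
Qed.

Lemma prop_tupleS M f : prop_tuple u M.+1 f = prop_tuple u M f *m prop u (f M) 0.
Proof. by rewrite /prop_tuple -(addn1 M) iotaD map_cat mprod_cat /= mulmx1. Qed.

Lemma mainV M (t t' s : nat -> nat) :
  (forall j, (j < M)%N -> (t' j < n)%N) ->
  (forall i j, (i < j)%N -> (j < M)%N -> (t i < t j)%N) ->
  (forall j, s j = maxn (t j) (t' j)) ->
  prop_tuple u M t = mprod [seq prop u (t j) (t' j) | j <- rev (iota 0 M) & (t j < t' j)%N]
     *m prop_tuple u M s.
Proof.
move=> h1 h2 hs; elim: M h1 h2 => [|M IH] h1 h2; first by rewrite /= mul1mx.
have IH' := IH (fun j hj => h1 j (ltnW hj)) (fun i j hij hj => h2 i j hij (ltnW hj)).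
rewrite !prop_tupleS rev_iotaS /= hs.
case: ifP => H.
  rewrite (maxn_idPr (ltnW H)) /= -!mulmxA (mulmxA (mprod _)) -IH' !mulmxA.
  rewrite [prop u (t M) (t' M) *m _]comm_mprod.
    by rewrite -mulmxA propL // h1.
  move=> y /mapP [i Hi ->]; move: Hi; rewrite mem_iota => Hi.
  apply: comm_prop => //; first by apply: h2; lia.
  by apply: h1.
rewrite (maxn_idPl _); last by rewrite leqNgt H.
by rewrite mulmxA -IH'.
Qed.

End Props.

Theorem lemmaA1 (C : numClosedFieldType) (n : nat) (u : nat -> 'M[C]_(2 ^ n))
    (hu : forall k : nat, (k.+1 < n)%N -> unitary (u k) /\ acts_on_pair k (u k))
    (M : nat) (t t' : nat -> nat)
    (ht_lt : forall j : nat, (j < M)%N -> (t j < n)%N)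
    (ht'_lt : forall j : nat, (j < M)%N -> (t' j < n)%N)
    (ht_inc : forall i j : nat, (i < j)%N -> (j < M)%N -> (t i < t j)%N)
    (ht'_inc : forall i j : nat, (i < j)%N -> (j < M)%N -> (t' i < t' j)%N) :
  let s := fun j => maxn (t j) (t' j) in
  let V := mprod [seq prop u (t j) (t' j) | j <- rev (iota 0 M) & (t j < t' j)%N] in
  let W := mprod [seq prop u (t' j) (t j) | j <- rev (iota 0 M) & (t' j < t j)%N] in
  prop_tuple u M t = V *m prop_tuple u M s /\
  prop_tuple u M t' = W *m prop_tuple u M s.
Proof.
move=> s V W; split.
  by apply: mainV.
by apply: mainV => // j; rewrite /s maxnC.
Qed.
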